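(* Let $\mathcal{N}$ be an exact category, let $k\ge 1$, and let $\mathbb{P}=(P_*,d,d')$ be a binary acyclic complex in $\mathcal{N}$ supported on $[0,k]$. Let $\mathrm{sw}(\mathbb{P})=(P_*,d',d)$ be the binary acyclic complex obtained by switching top and bottom differential. Then $\mathrm{sw}(\mathbb{P})=-\mathbb{P}$ in $L_1^k(\mathcal{N})$.
   Context: A binary acyclic complex $\mathbb{P}=(P_*,d,d')$ in $\mathcal{N}$ is a graded object $P_*$ of $\mathcal{N}$ supported on a finite subset of $[0,\infty)$, together with two degree $-1$ maps $d,d'$ (top and bottom differentials) such that both $\mathbb{P}^\top=(P_*,d)$ and $\mathbb{P}^\bot=(P_*,d')$ are acyclic chain complexes (each differential $P_n\to P_{n-1}$ factors as an admissible epimorphism $P_n\twoheadrightarrow J_{n-1}$ followed by an admissible monomorphism $J_{n-1}\rightarrowtail P_{n-1}$ with $J_n\rightarrowtail P_n\twoheadrightarrow J_{n-1}$ short exact for all $n$). It is diagonal if $d=d'$. Morphisms are degree-$0$ maps that are chain maps for both differentials; with degreewise short exact sequences these form an exact category. For $k\ge0$, $B_1^k(\mathcal{N})$ is the Grothendieck group of the exact category of binary acyclic complexes supported on $[0,k]$, and $K_1^k(\mathcal{N})$ is its quotient by classes of diagonal complexes. For isomorphisms $\alpha,\beta\colon P\to Q$, $\langle\alpha,\beta\rangle$ is the class of the binary complex with $P$ in degree $1$, $Q$ in degree $0$, top differential $\alpha$, bottom differential $\beta$. A binary ladder is $(\mathbb{P},\mathbb{Q},\sigma,\tau)$ with $\sigma\colon\mathbb{P}^\top\to\mathbb{Q}^\top$,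 $\tau\colon\mathbb{P}^\bot\to\mathbb{Q}^\bot$ chain isomorphisms. For $k\ge1$, $L_1^k(\mathcal{N})$ is the quotient of $K_1^k(\mathcal{N})$ by the relations $\mathbb{Q}-\mathbb{P}=\sum_{i=0}^k(-1)^i\langle\sigma_i,\tau_i\rangle$ for all binary ladders with $\mathbb{P},\mathbb{Q}$ supported on $[0,k]$, $P_i=Q_i$ for all $i$, and all $\sigma_i,\tau_i$ involutions. *)

(* Defs.v *)
(* Exact categories, binary acyclic complexes and the group
   L_1^k, encoded via the universal property of the Grothendieck group. *)
From HB Require Import structures.
From mathcomp Require Import all_boot all_order all_algebra.
Set Implicit Arguments. Unset Strict Implicit. Unset Printing Implicit Defensive.
Import GRing.Theory.
Local Open Scope ring_scope.

Record additiveCat := AdditiveCat {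
  Obj :> Type;
  Hom : Obj -> Obj -> zmodType;
  idm : forall A, Hom A A;
  comp : forall A B C, Hom B C -> Hom A B -> Hom A C;
  compA : forall A B C D (h : Hom C D) (g : Hom B C) (f : Hom A B),
    comp h (comp g f) = comp (comp h g) f;
  comp1m : forall A B (f : Hom A B), comp (idm B) f = f;
  compm1 : forall A B (f : Hom A B), comp f (idm A) = f;
  compDl : forall A B C (g1 g2 : Hom B C) (f : Hom A B),
    comp (g1 + g2) f = comp g1 f + comp g2 f;
  compDr : forall A B C (g : Hom B C) (f1 f2 : Hom A B),
    comp g (f1 + f2) = comp g f1 + comp g f2;
  zobj : Obj;
  zobj_zero : idm zobj = 0;
  biprod : forall A B : Obj, exists (S : Obj) (i1 : Hom A S) (i2 : Hom B S)
    (p1 : Hom S A) (p2 : Hom S B),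
    [/\ comp p1 i1 = idm A, comp p2 i2 = idm B &
        comp i1 p1 + comp i2 p2 = idm S]
}.
Arguments comp {a A B C}.
Arguments idm {a}.
Arguments zobj {a}.

Section CatDefs.
Variable C : additiveCat.

Definition is_zero (X : C) : Prop := idm X = 0.

Definition is_iso (A B : C) (f : Hom A B) : Prop :=
  exists g : Hom B A, comp g f = idm A /\ comp f g = idm B.

Definition is_kernel (A B D : C) (i : Hom A B) (p : Hom B D) : Prop :=
  comp p i = 0 /\
  forall (X : C) (f : Hom X B), comp p f = 0 -> exists! g : Hom X A, comp i g = f.
Definition is_cokernel (A B D : C) (i : Hom A B) (p : Hom B D) : Prop :=
  comp p i = 0 /\
  forall (X : C) (f : Hom B X), comp f i = 0 -> exists! g : Hom D X, comp g p = f.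

Definition is_pushout (A B A' B' : C) (i : Hom A B) (f : Hom A A')
  (i' : Hom A' B') (f' : Hom B B') : Prop :=
  comp f' i = comp i' f /\
  forall (X : C) (u : Hom B X) (v : Hom A' X), comp u i = comp v f ->
    exists! w : Hom B' X, comp w f' = u /\ comp w i' = v.

Definition is_pullback (B D D' B' : C) (p : Hom B D) (g : Hom D' D)
  (p' : Hom B' D') (g' : Hom B' B) : Prop :=
  comp p g' = comp g p' /\
  forall (X : C) (u : Hom X B) (v : Hom X D'), comp p u = comp g v ->
    exists! w : Hom X B', comp g' w = u /\ comp p' w = v.
End CatDefs.

Record exactCat := ExactCat {
  ecat :> additiveCat;
  Ex : forall A B D : ecat, Hom A B -> Hom B D -> Prop;
  Ex_kercoker : forall A B D (i : Hom A B) (p : Hom B D),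
    Ex i p -> is_kernel i p /\ is_cokernel i p;
  Ex_iso : forall A B D A' B' D' (i : Hom A B) (p : Hom B D)
    (i' : Hom A' B') (p' : Hom B' D') (a : Hom A A') (b : Hom B B') (c : Hom D D'),
    Ex i p -> is_iso a -> is_iso b -> is_iso c ->
    comp b i = comp i' a -> comp c p = comp p' b -> Ex i' p';
  Ex_E0 : forall A : ecat, exists (D : ecat) (p : Hom A D), Ex (idm A) p;
  Ex_E0op : forall A : ecat, exists (D : ecat) (i : Hom D A), Ex i (idm A);
  Ex_E1 : forall A B D (i : Hom A B) (j : Hom B D),
    (exists (X : ecat) (p : Hom B X), Ex i p) ->
    (exists (X : ecat) (q : Hom D X), Ex j q) ->
    exists (X : ecat) (r : Hom D X), Ex (comp j i) r;
  Ex_E1op : forall B D D' (p : Hom B D) (q : Hom D D'),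
    (exists (X : ecat) (i : Hom X B), Ex i p) ->
    (exists (X : ecat) (j : Hom X D), Ex j q) ->
    exists (X : ecat) (s : Hom X B), Ex s (comp q p);
  Ex_E2 : forall A B A' (i : Hom A B) (f : Hom A A'),
    (exists (X : ecat) (p : Hom B X), Ex i p) ->
    exists (B' : ecat) (i' : Hom A' B') (f' : Hom B B'),
      is_pushout i f i' f' /\ exists (X : ecat) (p' : Hom B' X), Ex i' p';
  Ex_E2op : forall B D D' (p : Hom B D) (g : Hom D' D),
    (exists (X : ecat) (i : Hom X B), Ex i p) ->
    exists (B' : ecat) (p' : Hom B' D') (g' : Hom B' B),
      is_pullback p g p' g' /\ exists (X : ecat) (i' : Hom X B'), Ex i' p'
}.
Arguments Ex {e A B D}.

Section Binary.
Variable N : exactCat.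

Definition diffs (G : nat -> N) := forall n, Hom (G n.+1) (G n).

Record gcx := Gcx { gobj : nat -> N; dtop : diffs gobj; dbot : diffs gobj }.

Definition supported_on (k : nat) (G : nat -> N) : Prop :=
  forall n : nat, (k < n)%N -> is_zero (G n).

(* (G, d) is acyclic: d_n : G_{n+1} -> G_n factors as
   G_{n+1} ->> J_{n+1} >-> G_n with J_{n+1} >-> G_n ->> J_n short exact for
   all n; J_0 plays the role of J_{-1}, a subobject of G_{-1} = 0. *)
Definition acyclic (G : nat -> N) (d : diffs G) : Prop :=
  exists (J : nat -> N) (e : forall n, Hom (G n) (J n))
         (m : forall n, Hom (J n.+1) (G n)),
    [/\ is_zero (J 0),
        forall n, d n = comp (m n) (e n.+1) &
        forall n, Ex (m n) (e n)].

Definition bac (k : nat) (X : gcx) : Prop :=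
  [/\ supported_on k (gobj X), acyclic (dtop X) & acyclic (dbot X)].

Definition is_chain (G H : nat -> N) (dG : diffs G) (dH : diffs H)
  (s : forall n, Hom (G n) (H n)) : Prop :=
  forall n, comp (dH n) (s n.+1) = comp (s n) (dG n).

Definition is_bmor (X Y : gcx) (s : forall n, Hom (gobj X n) (gobj Y n)) : Prop :=
  is_chain (dtop X) (dtop Y) s /\ is_chain (dbot X) (dbot Y) s.

Definition is_diagonal (X : gcx) : Prop := forall n, dtop X n = dbot X n.

Definition sw (X : gcx) : gcx := Gcx (dbot X) (dtop X).

Definition pobj (A B : N) (n : nat) : N :=
  match n with 0 => B | 1 => A | _ => zobj end.
Definition pdiff (A B : N) (a : Hom A B) : diffs (pobj A B) :=
  fun n => match n return Hom (pobj A B n.+1) (pobj A B n) with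
           | 0 => a | _.+1 => 0 end.
Definition bpair (A B : N) (a b : Hom A B) : gcx :=
  Gcx (pdiff a) (pdiff b).

(* A function f from binary complexes to an abelian group V that induces a
   homomorphism on L_1^k: it is additive on (degreewise) short exact
   sequences of binary acyclic complexes supported on [0,k] (B_1^k), kills
   diagonal ones (K_1^k) and satisfies the ladder relations (L_1^k).
   Values of f on non-acyclic data are irrelevant. *)
Definition B1_hom (V : zmodType) (k : nat) (f : gcx -> V) : Prop :=
  forall (X Y Z : gcx) (i : forall n, Hom (gobj X n) (gobj Y n))
         (p : forall n, Hom (gobj Y n) (gobj Z n)),
    bac k X -> bac k Y -> bac k Z -> is_bmor i -> is_bmor p ->
    (forall n, Ex (i n) (p n)) -> f Y = f X + f Z.

Definition K1_hom (V : zmodType) (k : nat) (f : gcx -> V) : Prop :=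
  B1_hom k f /\ forall X, bac k X -> is_diagonal X -> f X = 0.

Definition is_involution (A : N) (s : Hom A A) : Prop := comp s s = idm A.

Definition L1_hom (V : zmodType) (k : nat) (f : gcx -> V) : Prop :=
  K1_hom k f /\
  forall (G : nat -> N) (d1 d1' d2 d2' : diffs G) (s t : forall n, Hom (G n) (G n)),
    bac k (Gcx d1 d1') -> bac k (Gcx d2 d2') ->
    (forall n, is_involution (s n)) -> (forall n, is_involution (t n)) ->
    is_chain d1 d2 s -> is_chain d1' d2' t ->
    f (Gcx d2 d2') - f (Gcx d1 d1') =
      \sum_(i < k.+1) (if odd i then - f (bpair (s i) (t i))
                       else f (bpair (s i) (t i))).
End Binary.

(* Main.v *)
Require Import Defs.
From mathcomp Require Import all_boot all_order all_algebra.
From Stdlib Require Import IndefiniteDescription.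
Require Import Defs.
Set Implicit Arguments. Unset Strict Implicit. Unset Printing Implicit Defensive.
Import GRing.Theory.
Local Open Scope ring_scope.

Section Aux.
Variable N : exactCat.

Lemma comp0m (A B C : N) (f : Hom A B) : comp (0 : Hom B C) f = 0.
Proof. by apply: (@addrI _ (comp (0 : Hom B C) f)); rewrite -compDl !addr0. Qed.

Lemma compm0 (A B C : N) (g : Hom B C) : comp g (0 : Hom A B) = 0.
Proof. by apply: (@addrI _ (comp g (0 : Hom A B))); rewrite -compDr !addr0. Qed.

Lemma zero_from (Z Y : N) (hZ : is_zero Z) (h : Hom Z Y) : h = 0.
Proof. have hZ' : idm Z = 0 := hZ. by rewrite -[h]compm1 hZ' compm0. Qed.

Lemma zero_to (Z Y : N) (hZ : is_zero Z) (h : Hom Y Z) : h = 0.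
Proof. have hZ' : idm Z = 0 := hZ. by rewrite -[h]comp1m hZ' comp0m. Qed.

Lemma uniq2 (T : Type) (P : T -> Prop) x y : (exists! z, P z) -> P x -> P y -> x = y.
Proof. by case=> z [_ U] px py; rewrite -(U x px) (U y py). Qed.

Record bip (A B : N) := Bip {
  bS : N; bi1 : Hom A bS; bi2 : Hom B bS; bp1 : Hom bS A; bp2 : Hom bS B;
  bax1 : comp bp1 bi1 = idm A; bax2 : comp bp2 bi2 = idm B;
  bax3 : comp bi1 bp1 + comp bi2 bp2 = idm bS }.

Definition mkbip (A B : N) : bip A B.
Proof.
case: (constructive_indefinite_description _ (biprod A B)) => S HS.
case: (constructive_indefinite_description _ HS) => i1 H1.
case: (constructive_indefinite_description _ H1) => i2 H2.
case: (constructive_indefinite_description _ H2) => p1 H3.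
case: (constructive_indefinite_description _ H3) => p2 [h1 h2 h3].
exact: (@Bip A B S i1 i2 p1 p2 h1 h2 h3).
Defined.

Section BipL.
Variables (A B : N) (X : bip A B).

Lemma p1i2 : comp (bp1 X) (bi2 X) = 0.
Proof.
have H : comp (bi1 X) (comp (bp1 X) (bi2 X)) = 0.
  have := congr1 (fun g => comp g (bi2 X)) (bax3 X).
  rewrite /= compDl comp1m -!compA bax2 compm1 => E.
  by apply: (@addIr _ (bi2 X)); rewrite E add0r.
by rewrite -[comp (bp1 X) (bi2 X)]comp1m -(bax1 X) -compA H compm0.
Qed.

Lemma p2i1 : comp (bp2 X) (bi1 X) = 0.
Proof.
have H : comp (bi2 X) (comp (bp2 X) (bi1 X)) = 0.
  have := congr1 (fun g => comp g (bi1 X)) (bax3 X).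
  rewrite /= compDl comp1m -!compA bax1 compm1 => E.
  by apply: (@addrI _ (bi1 X)); rewrite E addr0.
by rewrite -[comp (bp2 X) (bi1 X)]comp1m -(bax2 X) -compA H compm0.
Qed.

Lemma b11 (Y : N) (f : Hom Y A) : comp (bp1 X) (comp (bi1 X) f) = f.
Proof. by rewrite compA bax1 comp1m. Qed.
Lemma b22 (Y : N) (f : Hom Y B) : comp (bp2 X) (comp (bi2 X) f) = f.
Proof. by rewrite compA bax2 comp1m. Qed.
Lemma b12 (Y : N) (f : Hom Y B) : comp (bp1 X) (comp (bi2 X) f) = 0.
Proof. by rewrite compA p1i2 comp0m. Qed.
Lemma b21 (Y : N) (f : Hom Y A) : comp (bp2 X) (comp (bi1 X) f) = 0.
Proof. by rewrite compA p2i1 comp0m. Qed.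

Lemma bip_extl (Y : N) (f g : Hom (bS X) Y) :
  comp f (bi1 X) = comp g (bi1 X) -> comp f (bi2 X) = comp g (bi2 X) -> f = g.
Proof.
move=> h1 h2.
by rewrite -[f]compm1 -[g]compm1 -(bax3 X) !compDr !compA h1 h2.
Qed.
End BipL.

Ltac bsimp := repeat progress (rewrite ?compDl ?compDr -?compA ?bax1 ?bax2 ?p1i2 ?p2i1
  ?b11 ?b12 ?b21 ?b22 ?compm1 ?comp1m ?comp0m ?compm0 ?addr0 ?add0r /=).

Definition dsm (A B C D : N) (X : bip A B) (Y : bip C D) (a : Hom A C) (b : Hom B D)
  : Hom (bS X) (bS Y) :=
  comp (bi1 Y) (comp a (bp1 X)) + comp (bi2 Y) (comp b (bp2 X)).

Lemma dsm_i1 (A B C D : N) (X : bip A B) (Y : bip C D) a b :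
  comp (dsm X Y a b) (bi1 X) = comp (bi1 Y) a.
Proof. by rewrite /dsm; bsimp. Qed.
Lemma dsm_i2 (A B C D : N) (X : bip A B) (Y : bip C D) a b :
  comp (dsm X Y a b) (bi2 X) = comp (bi2 Y) b.
Proof. by rewrite /dsm; bsimp. Qed.
Lemma p2_dsm (A B C D : N) (X : bip A B) (Y : bip C D) a b :
  comp (bp2 Y) (dsm X Y a b) = comp b (bp2 X).
Proof. by rewrite /dsm; bsimp. Qed.

Lemma dsm_comp (A B C D E F : N) (X : bip A B) (Y : bip C D) (Z : bip E F)
  (a : Hom C E) (b : Hom D F) (c : Hom A C) (e : Hom B D) :
  comp (dsm Y Z a b) (dsm X Y c e) = dsm X Z (comp a c) (comp b e).
Proof. by rewrite /dsm; bsimp. Qed.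

Definition swp (A : N) (X : bip A A) : Hom (bS X) (bS X) :=
  comp (bi1 X) (bp2 X) + comp (bi2 X) (bp1 X).

Lemma swp_inv (A : N) (X : bip A A) : comp (swp X) (swp X) = idm (bS X).
Proof. by rewrite /swp; bsimp; rewrite bax3. Qed.

Lemma swp_dsm (A C : N) (X : bip A A) (Y : bip C C) (a b : Hom A C) :
  comp (swp Y) (dsm X Y a b) = comp (dsm X Y b a) (swp X).
Proof. by rewrite /swp /dsm; bsimp. Qed.

Definition flipb (A B : N) (X : bip A B) : bip B A.
Proof.
refine (@Bip B A (bS X) (bi2 X) (bi1 X) (bp2 X) (bp1 X) (bax2 X) (bax1 X) _).
by rewrite addrC bax3.
Defined.

Lemma dsm_flip (A B C D : N) (X : bip A B) (Y : bip C D) a b :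
  dsm (flipb X) (flipb Y) b a = dsm X Y a b.
Proof. by rewrite /dsm /= addrC. Qed.

Lemma bip_zero (A B : N) (X : bip A B) : is_zero A -> is_zero B -> is_zero (bS X).
Proof.
move=> hA hB; rewrite /is_zero -(bax3 X) (zero_to hA (bp1 X)) (zero_to hB (bp2 X)).
by rewrite !compm0 addr0.
Qed.

Lemma Ex_zero_ker (D B : N) (i : Hom D B) : Ex i (idm B) -> is_zero D.
Proof.
move=> /Ex_kercoker [[hi hu] _].
rewrite comp1m in hi.
have := hu D 0 ltac:(by rewrite compm0).
move=> U.
apply: (uniq2 U); first by rewrite compm1 hi.
by rewrite compm0.
Qed.

Lemma pushout_adm (A B A' B' : N) (i : Hom A B) (f : Hom A A') (i' : Hom A' B') (f' : Hom B B') :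
  (exists X (p : Hom B X), Ex i p) -> is_pushout i f i' f' -> exists X (p : Hom B' X), Ex i' p.
Proof.
move=> hi [hc hu].
have [B'' [i'' [f'' [[hc'' hu''] [X [p hp]]]]]] := Ex_E2 f hi.
have [w [[w1 w2] _]] := hu'' B' f' i' hc.
have [w' [[w1' w2'] _]] := hu B'' f'' i'' hc''.
have e1 : comp w' w = idm B''.
  apply: (uniq2 (hu'' B'' f'' i'' hc'')); split.
  - by rewrite -compA w1 w1'.
  - by rewrite -compA w2 w2'.
  - by rewrite comp1m.
  - by rewrite comp1m.
have e2 : comp w w' = idm B'.
  apply: (uniq2 (hu B' f' i' hc)); split.
  - by rewrite -compA w1' w1.
  - by rewrite -compA w2' w2.
  - by rewrite comp1m.
  - by rewrite comp1m.
exists X, (comp p w').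
apply: (Ex_iso (a := idm A') (b := w) (c := idm X) hp).
- by exists (idm A'); rewrite comp1m.
- by exists w'.
- by exists (idm X); rewrite comp1m.
- by rewrite w2 compm1.
- by rewrite comp1m -compA e1 compm1.
Qed.

Lemma coker_Ex (A B D D' : N) (j : Hom A B) (r : Hom B D) (q : Hom B D') :
  Ex j r -> comp q j = 0 ->
  (forall X (g : Hom B X), comp g j = 0 -> exists! h : Hom D' X, comp h q = g) -> Ex j q.
Proof.
move=> hr hq hu.
have [_ [hr0 hru]] := Ex_kercoker hr.
have [c [hc _]] := hru D' q hq.
have [c' [hc' _]] := hu D r hr0.
have e1 : comp c' c = idm D.
  by apply: (uniq2 (hru D r hr0)); [rewrite -compA hc hc' | rewrite comp1m].
have e2 : comp c c' = idm D'.
  by apply: (uniq2 (hu D' q hq)); [rewrite -compA hc' hc | rewrite comp1m].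
apply: (Ex_iso (a := idm A) (b := idm B) (c := c) hr).
- by exists (idm A); rewrite comp1m.
- by exists (idm B); rewrite comp1m.
- by exists c'.
- by rewrite comp1m compm1.
- by rewrite hc compm1.
Qed.

Lemma split_Ex (A B : N) (X : bip A B) : Ex (bi1 X) (bp2 X).
Proof.
have [Z [i0 hi0]] := Ex_E0op B.
have hZ := Ex_zero_ker hi0.
have adm : exists Y (p : Hom (bS X) Y), Ex (bi1 X) p.
  apply: (pushout_adm (i := i0) (f := 0 : Hom Z A) (f' := bi2 X)).
    by exists B, (idm B).
  split.
    by rewrite (zero_from hZ i0) !compm0.
  move=> Y u v _.
  exists (comp v (bp1 X) + comp u (bp2 X)); split.
    by split; bsimp.
  move=> w' [h1 h2].
  apply: bip_extl; bsimp.
    by rewrite h2.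
  by rewrite h1.
have [Y [p hp]] := adm.
apply: (coker_Ex hp); first by rewrite p2i1.
move=> Y' g hg.
exists (comp g (bi2 X)); split.
  apply: bip_extl; bsimp; last by [].
  by rewrite hg.
by move=> h hh; rewrite -hh; bsimp.
Qed.

Lemma dsm1_adm (A B C D : N) (i : Hom A B) (p : Hom B D) (SA : bip A C) (SB : bip B C) :
  Ex i p -> exists X (q : Hom (bS SB) X), Ex (dsm SA SB i (idm C)) q.
Proof.
move=> hp.
apply: (pushout_adm (i := i) (f := bi1 SA) (f' := bi1 SB)).
  by exists D, p.
split.
  by rewrite dsm_i1.
move=> X u v huv.
exists (comp u (bp1 SB) + comp (comp v (bi2 SA)) (bp2 SB)); split.
  split; first by bsimp.
  apply: bip_extl; rewrite /dsm; bsimp; by rewrite ?huv.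
move=> w' [h1 h2].
apply: bip_extl; bsimp.
  by rewrite h1.
by rewrite -h2 /dsm; bsimp.
Qed.

Lemma dsm_Ex (A B D A' B' D' : N) (i : Hom A B) (p : Hom B D) (i' : Hom A' B')
  (p' : Hom B' D') (SA : bip A A') (SB : bip B B') (SD : bip D D') :
  Ex i p -> Ex i' p' -> Ex (dsm SA SB i i') (dsm SB SD p p').
Proof.
move=> hp hp'.
pose M := mkbip B A'.
have h1 := dsm1_adm SA M hp.
have h2 : exists X (q : Hom (bS SB) X), Ex (dsm M SB (idm B) i') q.
  by have := dsm1_adm (flipb M) (flipb SB) hp'; rewrite dsm_flip.
have [X [r hr]] := Ex_E1 h1 h2.
rewrite dsm_comp comp1m compm1 in hr.
have [[hpi _] [_ hpu]] := Ex_kercoker hp.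
have [[hpi' _] [_ hpu']] := Ex_kercoker hp'.
apply: (coker_Ex hr).
  by rewrite dsm_comp hpi hpi' /dsm; bsimp.
move=> Y g hg.
have hg1 : comp (comp g (bi1 SB)) i = 0.
  by rewrite -compA -(dsm_i1 SA SB i i') compA hg comp0m.
have hg2 : comp (comp g (bi2 SB)) i' = 0.
  by rewrite -compA -(dsm_i2 SA SB i i') compA hg comp0m.
have [k1 [ek1 U1]] := hpu Y _ hg1.
have [k2 [ek2 U2]] := hpu' Y _ hg2.
exists (comp k1 (bp1 SD) + comp k2 (bp2 SD)); split.
  apply: bip_extl; rewrite /dsm; bsimp; by rewrite ?ek1 ?ek2.
move=> h hh.
apply: bip_extl; bsimp.
  apply: U1; by rewrite -hh /dsm; bsimp.
apply: U2; by rewrite -hh /dsm; bsimp.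
Qed.

Section Cx.
Variables (G1 G2 : nat -> N) (SS : forall n, bip (G1 n) (G2 n)).

Definition ds (a : diffs G1) (b : diffs G2) : diffs (fun n => bS (SS n)) :=
  fun n => dsm (SS n.+1) (SS n) (a n) (b n).

Lemma acyc_ds a b : acyclic a -> acyclic b -> acyclic (ds a b).
Proof.
move=> [J [e [m [hJ0 hd hEx]]]] [J' [e' [m' [hJ0' hd' hEx']]]].
pose JJ := fun n => mkbip (J n) (J' n).
exists (fun n => bS (JJ n)), (fun n => dsm (SS n) (JJ n) (e n) (e' n)),
  (fun n => dsm (JJ n.+1) (SS n) (m n) (m' n)).
split.
- exact: bip_zero.
- by move=> n; rewrite /ds dsm_comp -hd -hd'.
- by move=> n; apply: dsm_Ex.
Qed.

Lemma supp_ds k : supported_on k G1 -> supported_on k G2 ->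
  supported_on k (fun n => bS (SS n)).
Proof. by move=> h1 h2 n hn; apply: bip_zero; [apply: h1 | apply: h2]. Qed.
End Cx.
End Aux.

Theorem lemma3p2 (N : exactCat) (k : nat) (hk : (1 <= k)%N)
  (P : gcx N) (hP : bac k P) :
  forall (V : zmodType) (f : gcx N -> V), L1_hom k f -> f (sw P) = - f P.
Proof.
case: P hP => G d d' [hs ha hb] V f [[hB hD] hL] /=.
rewrite /sw /=.
pose SS := fun n => mkbip (G n) (G n).
have hS : supported_on k (fun n => bS (SS n)) by apply: supp_ds.
have bacs : forall a b c e : diffs G, acyclic a -> acyclic b -> acyclic c -> acyclic e ->
    bac k (Gcx (ds SS a b) (ds SS c e)).
  by move=> a b c e h1 h2 h3 h4; split => //=; apply: acyc_ds.
have add : forall a b c e : diffs G, acyclic a -> acyclic b -> acyclic c -> acyclic e ->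
    f (Gcx (ds SS a b) (ds SS c e)) = f (Gcx a c) + f (Gcx b e).
  move=> a b c e h1 h2 h3 h4.
  apply: (hB (Gcx a c) (Gcx (ds SS a b) (ds SS c e)) (Gcx b e) (fun n => bi1 (SS n)) (fun n => bp2 (SS n))).
  - by split.
  - exact: bacs.
  - by split.
  - by split => n /=; rewrite /ds dsm_i1.
  - by split => n /=; rewrite /ds p2_dsm.
  - by move=> n; apply: split_Ex.
have inv_s : forall n, is_involution (swp (SS n)) by move=> n; apply: swp_inv.
have inv_t : forall n, is_involution (idm (bS (SS n))) by move=> n; rewrite /is_involution comp1m.
have ch_s : forall a b : diffs G, is_chain (ds SS a b) (ds SS b a) (fun n => swp (SS n)).
  by move=> a b n; rewrite /ds swp_dsm.
have ch_t : forall a : diffs (fun n => bS (SS n)), is_chain a a (fun n => idm (bS (SS n))).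
  by move=> a n; rewrite comp1m compm1.
have E1 := hL _ _ _ _ _ _ _ (bacs _ _ _ _ ha hb hb ha) (bacs _ _ _ _ hb ha hb ha)
  inv_s inv_t (ch_s d d') (ch_t (ds SS d' d)).
have E2 := hL _ _ _ _ _ _ _ (bacs _ _ _ _ ha hb ha ha) (bacs _ _ _ _ hb ha ha ha)
  inv_s inv_t (ch_s d d') (ch_t (ds SS d d)).
rewrite hD in E1; last by [].
  2: exact: bacs.
rewrite !add // in E1 E2.
rewrite (hD (Gcx d d)) in E2; last by []; last by split.
rewrite /= in E1 E2; rewrite -E2 !addr0 !add0r subrr in E1.
have : f (Gcx d d') + f (Gcx d' d) = 0 by apply/eqP; rewrite -oppr_eq0 E1.
move/eqP; rewrite addr_eq0 => /eqP ->.
by rewrite opprK.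
Qed.
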